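(* In the setting of the context, with $\alpha_k=\frac a{b+k}$, $a>0$, $b>1$, $\frac ab\le\frac1{2M\tilde L}$, put $s=a\sigma_{\min}^2$. For $n\ge1$ let $S_n=\sum_{i=1}^nq(\alpha_{i-1})B_i^{(n)}$. If $s<2$, there is a constant $K$ independent of $n$ with $S_n\le K(b+n)^{-s}$ for all $n\ge1$. If $s>2$, there is a constant $K$ independent of $n$ with $S_n\le K(b+n)^{-2}$ for all $n\ge1$.
   Context: Standing setting: $M\ge N$, $A\in\mathbb{R}^{M\times N}$ of full column rank with rows $a_1,\dots,a_M$, right-hand side $(b_1,\dots,b_M)$, $F(x)=\frac12\|Ax-(b_1,\dots,b_M)^\top\|^2$ with unique minimizer $x_*$; singular values $\sigma_1\ge\dots\ge\sigma_N>0$, $\sigma_{\max}=\sigma_1$, $\sigma_{\min}=\sigma_N$, $c(A)=\sigma_{\max}^2/\sigma_{\min}^2$, $\tilde L=\max_i\|a_i\|^2$, $f_i(x)=\frac M2(\langle a_i,x\rangle-b_i)^2$, $\sigma^2=\frac1M\sum_i\|\nabla f_i(x_* )\|^2$. Fix $\ell$. For $\alpha>0$: $A(\alpha)=1-2\alpha\sigma_\ell^2$, $B(\alpha)=\alpha^2M\tilde Lc(A)\sigma_{\max}^2$, $p(\alpha)=1-\alpha\sigma_{\min}^2$, $q(\alpha)=2\alpha^2\sigma^2$. For fixed $n$ and $0\le k\le n$: $B_k^{(n)}=\sum_{j=k}^n\Big(\prod_{i=j+1}^nA(\alpha_i)\Big)B(\alpha_j)\Big(\prod_{i=k}^{j-1}p(\alpha_i)\Big)$.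 (Step-size scalars $a,b$ are unrelated to $a_i,b_i$.) *)

(* Defs.v *)
From HB Require Import structures.
From mathcomp Require Import all_boot all_order all_algebra.
From mathcomp Require Import reals exp.
Set Implicit Arguments. Unset Strict Implicit. Unset Printing Implicit Defensive.
Import Order.TTheory GRing.Theory Num.Theory.
Local Open Scope ring_scope.

Section Defs.
Variable R : realType.

Definition sqnorm (n : nat) (v : 'cV[R]_n) : R := \sum_(i < n) (v i 0) ^+ 2.

(* sigma : nat -> R lists the singular values sigma_1 >= ... >= sigma_N of A
   (0-based: sigma 0 = sigma_1, ..., sigma N.-1 = sigma_N), i.e. a thin SVD
   A = U diag(sigma) V^T with U^T U = I_N, V^T V = I_N, sigma nonincreasing
   and nonnegative. *)
Definition singular_values (M N : nat) (A : 'M[R]_(M, N)) (sigma : nat -> R) :=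
  (forall i j, (i <= j)%N -> (j < N)%N -> sigma j <= sigma i) /\
  (forall i, (i < N)%N -> 0 <= sigma i) /\
  exists (U : 'M[R]_(M, N)) (V : 'M[R]_N),
    U^T *m U = 1%:M /\ V^T *m V = 1%:M /\
    A = U *m diag_mx (\row_(j < N) sigma j) *m V^T.

(* F(x) = 1/2 ||A x - y||^2 ; y is the right-hand side (b_1,...,b_M)^T *)
Definition Fobj (M N : nat) (A : 'M[R]_(M, N)) (y : 'cV[R]_M) (x : 'cV[R]_N) : R :=
  2^-1 * sqnorm (A *m x - y).

Definition Ltilde (M N : nat) (A : 'M[R]_(M, N)) : R :=
  \big[Num.max/0]_(i < M) \sum_(j < N) (A i j) ^+ 2.

Definition f_i (M N : nat) (A : 'M[R]_(M, N)) (y : 'cV[R]_M) (i : 'I_M)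
    (x : 'cV[R]_N) : R :=
  M%:R / 2 * ((A *m x) i 0 - y i 0) ^+ 2.

Definition grad_f_i (M N : nat) (A : 'M[R]_(M, N)) (y : 'cV[R]_M) (i : 'I_M)
    (x : 'cV[R]_N) : 'cV[R]_N :=
  (M%:R * ((A *m x) i 0 - y i 0)) *: (row i A)^T.

Definition noise_var (M N : nat) (A : 'M[R]_(M, N)) (y : 'cV[R]_M)
    (xs : 'cV[R]_N) : R :=
  M%:R^-1 * \sum_(i < M) sqnorm (grad_f_i A y i xs).

Definition condA (smax smin : R) : R := smax ^+ 2 / smin ^+ 2.

Definition Afun (sl alpha : R) : R := 1 - 2 * alpha * sl ^+ 2.
Definition Bfun (M : nat) (Lt smax smin alpha : R) : R :=
  alpha ^+ 2 * M%:R * Lt * condA smax smin * smax ^+ 2.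
Definition pfun (smin alpha : R) : R := 1 - alpha * smin ^+ 2.
Definition qfun (sig2 alpha : R) : R := 2 * alpha ^+ 2 * sig2.

Definition Bkn (M : nat) (sl Lt smax smin : R) (alpha : nat -> R) (n k : nat) : R :=
  \sum_(k <= j < n.+1)
     (\prod_(j.+1 <= i < n.+1) Afun sl (alpha i)) * Bfun M Lt smax smin (alpha j)
       * (\prod_(k <= i < j) pfun smin (alpha i)).

Definition Sn (M : nat) (sl Lt smax smin sig2 : R) (alpha : nat -> R) (n : nat) : R :=
  \sum_(1 <= i < n.+1) qfun sig2 (alpha i.-1) * Bkn M sl Lt smax smin alpha n i.

End Defs.

(* Main.v *)
Require Import Defs.
From HB Require Import structures.
From mathcomp Require Import all_boot all_order all_algebra.
From mathcomp Require Import reals exp sequences.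
From mathcomp Require Import ring lra.
Import Order.TTheory GRing.Theory Num.Theory.
Local Open Scope ring_scope.

Section Aux.
Variable R : realType.
Implicit Types x y r u v : R.

Lemma w_mul x u v : 0 < x -> x `^ (- u) * x `^ (- v) = x `^ (- (u + v)).
Proof. move=> hx; rewrite opprD powRD //; apply/implyP => _; exact: lt0r_neq0. Qed.

Lemma w_anti x u v : 1 <= x -> u <= v -> x `^ (- v) <= x `^ (- u).
Proof. by move=> hx huv; apply: ler_powR => //; rewrite lerN2. Qed.

Lemma w1 x : 0 < x -> x `^ (- 1) = x^-1.
Proof. by move=> hx; rewrite powR_inv1 // ltW. Qed.

Lemma w_base x y t : 0 < x -> x <= y -> 0 <= t -> y `^ (- t) <= x `^ (- t).
Proof.
move=> hx hxy ht; have hy : 0 < y by apply: lt_le_trans hxy.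
rewrite /powR (gt_eqF hx) (gt_eqF hy) ler_expR.
have : ln x <= ln y by rewrite ler_ln ?posrE.
move=> h; rewrite !mulNr lerN2; exact: ler_wpM2l.
Qed.

Lemma key x r : 0 < x -> 0 <= r -> x `^ (- r) * (1 - r / x) <= (x + 1) `^ (- r).
Proof.
move=> hx hr; have hx1 : 0 < x + 1 by lra.
rewrite /powR (gt_eqF hx) (gt_eqF hx1).
have hl : ln (x + 1) <= ln x + x^-1.
  have -> : x + 1 = x * (1 + x^-1) by field; lra.
  have hi : 0 < x^-1 by rewrite invr_gt0.
  rewrite lnM ?posrE //; last by lra.
  by rewrite lerD2l le_ln1Dx //; lra.
apply: (@le_trans _ _ (expR (- r * ln x + - (r / x)))).
  rewrite expRD; apply: ler_wpM2l; first exact: expR_ge0.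
  by have := expR_ge1Dx (- (r / x)); lra.
rewrite ler_expR.
have hh : 0 <= ln x + x^-1 - ln (x + 1) by lra.
have := mulr_ge0 hr hh.
rewrite mulrBr mulrDr /=; lra.
Qed.


Lemma rec_lemma (b s r t Cb Cq : R) (Aq Bq Pq Qq S E : nat -> R) :
  0 <= b -> 0 <= r -> r <= 1 -> r < s -> 0 <= t -> t <= 1 + r -> t < 2 * s ->
  0 <= Cb -> 0 <= Cq ->
  S 0%N = 0 -> E 0%N = 0 ->
  (forall n, S n.+1 = Aq n.+1 * S n + Bq n.+1 * (E n + Qq n)) ->
  (forall n, E n.+1 = Pq n.+1 * (E n + Qq n)) ->
  (forall n, let u := (b + n.+1%:R)^-1 in
     (0 <= Aq n.+1 /\ Aq n.+1 <= 1 - 2 * s * u) /\ (0 <= Pq n.+1 /\ Pq n.+1 <= 1 - s * u) /\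
     (0 <= Bq n.+1 /\ Bq n.+1 <= Cb * u ^+ 2) /\ (0 <= Qq n /\ Qq n <= Cq * u ^+ 2)) ->
  exists K, 0 <= K /\ forall n, S n <= K * (b + n%:R + 1) `^ (- t).
Proof.
move=> hb hr0 hr1 hrs ht0 ht1 ht2 hCb hCq S0 E0 HS HE H.
set K1 := Cq / (s - r).
set K2 := Cb * (K1 + Cq) / (2 * s - t).
have hK1 : 0 <= K1 by rewrite /K1 divr_ge0 //; lra.
have hK1e : K1 * (s - r) = Cq by rewrite /K1 mulrVK // unitfE; lra.
have hK2 : 0 <= K2 by rewrite /K2 divr_ge0 // ?mulr_ge0 //; lra.
have hK2e : K2 * (2 * s - t) = Cb * (K1 + Cq) by rewrite /K2 mulrVK // unitfE; lra.
exists K2; split => //.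
suff: forall n, [/\ 0 <= E n, E n <= K1 * (b + n%:R + 1) `^ (- r),
                    0 <= S n & S n <= K2 * (b + n%:R + 1) `^ (- t)].
  by move=> h n; case: (h n).
elim=> [|n [hE0 hE1 hS0 hS1]].
  rewrite S0 E0; split => //; apply: mulr_ge0 => //; exact: powR_ge0.
case: (H n) => [[hA0 hA1] [[hP0 hP1] [[hB0 hB1] [hQ0 hQ1]]]].
set x := b + n%:R + 1.
rewrite -/x in hE1 hS1.
have hxe : b + n.+1%:R = x by rewrite /x -natr1 addrA.
have hxe2 : b + n.+1%:R + 1 = x + 1 by rewrite hxe.
rewrite hxe in hA1 hP1 hB1 hQ1; rewrite hxe2 HS HE.
have hx1 : 1 <= x by rewrite /x; have := ler0n R n; lra.
have hx : 0 < x by lra.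
have hu : x^-1 = x `^ (-1) by rewrite w1.
have hu2 : x^-1 ^+ 2 = x `^ (-2) by rewrite expr2 hu w_mul //.
rewrite hu in hA1 hP1; rewrite hu2 in hB1 hQ1.
have hw0 : forall v, 0 <= x `^ v by move=> v; exact: powR_ge0.
split.
- by apply: mulr_ge0 => //; apply: addr_ge0.
- apply: (le_trans _ (ler_wpM2l hK1 (key x r hx hr0))).
  apply: (@le_trans _ _ ((1 - s * x `^ (-1)) * (K1 * x `^ (- r) + Cq * x `^ (-2)))).
    apply: ler_pM => //; first by apply: addr_ge0.
    exact: lerD.
  have e1 : x `^ (- r) * x `^ (-1) = x `^ (- (r + 1)) by rewrite w_mul.
  have l2 : x `^ (-2) <= x `^ (- (r + 1)) by apply: w_anti; lra.
  have hps : 0 <= 1 - s * x `^ (-1) by lra.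
  have hsw : 0 <= s * x `^ (-1) by apply: mulr_ge0 => //; lra.
  have l3 : (1 - s * x `^ (-1)) * (Cq * x `^ (-2)) <= Cq * x `^ (-2).
    by rewrite -[leRHS]mul1r; apply: ler_wpM2r; [apply: mulr_ge0|lra].
  have l4 : Cq * x `^ (-2) <= Cq * x `^ (- (r + 1)) by apply: ler_wpM2l.
  rewrite -subr_ge0.
  have -> : K1 * (x `^ (- r) * (1 - r / x)) - (1 - s * x `^ (-1)) * (K1 * x `^ (- r) + Cq * x `^ (-2))
     = K1 * (s - r) * (x `^ (- r) * x `^ (-1)) - (1 - s * x `^ (-1)) * (Cq * x `^ (-2)).
    by rewrite hu; ring.
  rewrite hK1e e1; lra.
- apply: addr_ge0; first exact: mulr_ge0.
  by apply: mulr_ge0 => //; apply: addr_ge0.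
- apply: (le_trans _ (ler_wpM2l hK2 (key x t hx ht0))).
  have hS : Aq n.+1 * S n <= (1 - 2 * s * x `^ (-1)) * (K2 * x `^ (- t)).
    by apply: ler_pM.
  have hB : Bq n.+1 * (E n + Qq n) <= Cb * x `^ (-2) * (K1 * x `^ (- r) + Cq * x `^ (-2)).
    by apply: ler_pM => //; [apply: addr_ge0|apply: lerD].
  have e1 : x `^ (- t) * x `^ (-1) = x `^ (- (t + 1)) by rewrite w_mul.
  have e2 : x `^ (-2) * x `^ (- r) = x `^ (- (2 + r)) by rewrite w_mul.
  have e3 : x `^ (-2) * x `^ (- 2) = x `^ (- (2 + 2)) by rewrite w_mul.
  have l2 : x `^ (- (2 + r)) <= x `^ (- (t + 1)) by apply: w_anti; lra.
  have l3 : x `^ (- (2 + 2)) <= x `^ (- (t + 1)) by apply: w_anti; lra.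
  have l4 : Cb * (K1 * x `^ (- (2 + r)) + Cq * x `^ (- (2 + 2))) <=
            Cb * (K1 + Cq) * x `^ (- (t + 1)).
    rewrite -mulrA; apply: ler_wpM2l => //; rewrite mulrDl.
    by apply: lerD; apply: ler_wpM2l.
  rewrite -hK2e -e1 -e2 -e3 in l4.
  have : Cb * x `^ (-2) * (K1 * x `^ (- r) + Cq * x `^ (-2)) =
         Cb * (K1 * (x `^ (-2) * x `^ (- r)) + Cq * (x `^ (-2) * x `^ (-2))) by ring.
  move=> e4; rewrite e4 in hB.
  have -> : K2 * (x `^ (- t) * (1 - t / x)) = (1 - 2 * s * x `^ (-1)) * (K2 * x `^ (- t))
      + K2 * (2 * s - t) * (x `^ (- t) * x `^ (-1)) by rewrite hu; ring.
  lra.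
Qed.
End Aux.

Section Rec.
Variable R : realType.

Lemma Bkn_rec M (sl Lt smax smin : R) alpha n k : (k <= n.+1)%N ->
  Bkn M sl Lt smax smin alpha n.+1 k =
  Afun sl (alpha n.+1) * Bkn M sl Lt smax smin alpha n k +
  Bfun M Lt smax smin (alpha n.+1) * \prod_(k <= i < n.+1) pfun smin (alpha i).
Proof.
move=> hk; rewrite /Bkn big_nat_recr //= [\prod_(n.+2 <= i < n.+2) _]big_geq // mul1r; congr (_ + _).
rewrite big_distrr; apply: eq_big_nat => j /andP [_ hj].
rewrite big_nat_recr //=; ring.
Qed.

Definition Ep (smin sig2 : R) (alpha : nat -> R) n :=
  \sum_(1 <= i < n.+1) qfun sig2 (alpha i.-1) * \prod_(i <= m < n.+1) pfun smin (alpha m).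

Lemma Ep_rec smin sig2 alpha n :
  Ep smin sig2 alpha n.+1 = pfun smin (alpha n.+1) * (Ep smin sig2 alpha n + qfun sig2 (alpha n)).
Proof.
rewrite /Ep [in LHS]big_nat_recr //= big_nat1 /= [in RHS]mulrDr [X in _ = _ + X]mulrC; congr (_ + _).
rewrite big_distrr; apply: eq_big_nat => i /andP [hi1 hi2].
rewrite big_nat_recr /=; [ring | exact: ltnW].
Qed.

Lemma Sn_rec M (sl Lt smax smin sig2 : R) alpha n :
  Sn M sl Lt smax smin sig2 alpha n.+1 =
  Afun sl (alpha n.+1) * Sn M sl Lt smax smin sig2 alpha n +
  Bfun M Lt smax smin (alpha n.+1) * (Ep smin sig2 alpha n + qfun sig2 (alpha n)).
Proof.
rewrite /Sn /Ep.
rewrite (eq_big_nat _ _ (F2 := fun i => qfun sig2 (alpha i.-1) *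
   (Afun sl (alpha n.+1) * Bkn M sl Lt smax smin alpha n i +
    Bfun M Lt smax smin (alpha n.+1) * \prod_(i <= m < n.+1) pfun smin (alpha m)))); last first.
  by move=> i /andP [_ hi]; rewrite Bkn_rec.
rewrite big_nat_recr //=.
have h0 : Bkn M sl Lt smax smin alpha n n.+1 = 0 by rewrite /Bkn big_geq.
have h1 : \prod_(n.+1 <= m < n.+1) pfun smin (alpha m) = 1 by rewrite big_geq.
rewrite h0 h1.
have -> : \sum_(1 <= i < n.+1) qfun sig2 (alpha i.-1) *
     (Afun sl (alpha n.+1) * Bkn M sl Lt smax smin alpha n i +
      Bfun M Lt smax smin (alpha n.+1) * \prod_(i <= m < n.+1) pfun smin (alpha m))
  = Afun sl (alpha n.+1) * \sum_(1 <= i < n.+1) qfun sig2 (alpha i.-1) * Bkn M sl Lt smax smin alpha n i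
    + Bfun M Lt smax smin (alpha n.+1) * \sum_(1 <= i < n.+1) qfun sig2 (alpha i.-1) * \prod_(i <= m < n.+1) pfun smin (alpha m).
  by rewrite !big_distrr -big_split; apply: eq_big_nat => i _ /=; ring.
ring.
Qed.

End Rec.

Section Frob.
Variable R : realType.

Lemma frob (M N : nat) (A : 'M[R]_(M, N)) sigma l :
  singular_values A sigma -> (l < N)%N -> sigma l ^+ 2 <= M%:R * Ltilde A.
Proof.
case=> _ [_ [U [V [hU [hV hA]]]]] hl.
have e1 : \tr (A^T *m A) = \sum_(i < M) \sum_(j < N) A i j ^+ 2.
  rewrite /mxtrace (eq_bigr (fun j => \sum_(i < M) A i j ^+ 2)); last first.
    by move=> j _; rewrite mxE; apply: eq_bigr => i _; rewrite mxE expr2.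
  by rewrite exchange_big.
have e2 : \tr (A^T *m A) = \sum_(j < N) sigma j ^+ 2.
  set D := diag_mx (\row_(j < N) sigma j).
  rewrite hA !trmx_mul trmxK tr_diag_mx -!mulmxA mxtrace_mulC !mulmxA.
  rewrite -[D *m U^T *m U]mulmxA hU mulmx1 -[D *m D *m V^T *m V]mulmxA hV mulmx1.
  rewrite mulmx_diag mxtrace_diag; apply: eq_bigr => j _; rewrite !mxE expr2.
  done.
have e3 : \sum_(i < M) \sum_(j < N) A i j ^+ 2 <= M%:R * Ltilde A.
  apply: (@le_trans _ _ (\sum_(i < M) Ltilde A)).
    apply: ler_sum => i _; rewrite /Ltilde.
    exact: (le_bigmax 0 (fun i => \sum_(j < N) A i j ^+ 2) i).
  by rewrite sumr_const card_ord mulr_natl.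
apply: le_trans e3; rewrite -e1 e2 (bigD1 (Ordinal hl)) //= lerDl.
by apply: sumr_ge0 => i _; exact: sqr_ge0.
Qed.

End Frob.

Theorem lemma16 (R : realType) (M N : nat) (A : 'M[R]_(M, N)) (y : 'cV[R]_M)
    (sigma : nat -> R) (ell : nat) (xs : 'cV[R]_N) (a b : R) :
  (0 < N)%N -> (N <= M)%N ->
  \rank A = N ->
  singular_values A sigma ->
  (forall x : 'cV[R]_N, Fobj A y xs <= Fobj A y x) ->
  (ell < N)%N ->
  0 < a -> 1 < b -> a / b <= (2 * M%:R * Ltilde A)^-1 ->
  let smax := sigma 0%N in
  let smin := sigma N.-1 in
  let sl := sigma ell in
  let sig2 := noise_var A y xs in
  let alpha := fun k : nat => a / (b + k%:R) in
  let S := Sn M sl (Ltilde A) smax smin sig2 alpha in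
  let s := a * smin ^+ 2 in
  (s < 2 -> exists K : R, forall n : nat, (1 <= n)%N ->
      S n <= K * (b + n%:R) `^ (- s)) /\
  (2 < s -> exists K : R, forall n : nat, (1 <= n)%N ->
      S n <= K * (b + n%:R) `^ (-2)).
Proof.
move=> hN hNM hrank hsv hmin hl ha hb hab smax smin sl sig2 alpha S s.
have hsv' := hsv; case: hsv' => hmono [hnn _].
have hN1 : (N.-1 < N)%N by rewrite prednK.
have hsmin0 : 0 <= smin by apply: hnn.
have hsl : smin <= sl by apply: hmono => //; rewrite -ltnS prednK.
have hslL : sl ^+ 2 <= M%:R * Ltilde A by apply: frob.
set ML := M%:R * Ltilde A.
have hab0 : 0 < a / b by apply: divr_gt0 => //; lra.
have hML : 0 < ML.
  have h1 : 0 < (2 * M%:R * Ltilde A)^-1 by apply: lt_le_trans hab.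
  rewrite invr_gt0 in h1; rewrite /ML; lra.
have hb0 : 0 < b by lra.
have halpha : forall k, 0 <= alpha k /\ alpha k <= a / b.
  move=> k; have hk := ler0n R k.
  have hbk : 0 < b + k%:R by lra.
  split; first by rewrite /alpha; apply: divr_ge0; lra.
  suff : 0 <= a / b - alpha k by lra.
  have -> : a / b - alpha k = a * k%:R / (b * (b + k%:R)) by rewrite /alpha; field; rewrite (gt_eqF hbk) (gt_eqF hb0).
  by apply: divr_ge0; [apply: mulr_ge0; lra | apply: mulr_ge0; lra].
have hasl : forall k, alpha k * sl ^+ 2 <= 2^-1.
  move=> k; case: (halpha k) => h0 h1.
  have hsl0 : 0 <= sl ^+ 2 by exact: sqr_ge0.
  apply: (@le_trans _ _ ((2 * ML)^-1 * ML)).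
    apply: ler_pM => //; apply: le_trans h1 _; by rewrite /ML mulrA.
  by rewrite invfM -mulrA mulVf ?mulr1 // gt_eqF.
have hsmin2 : smin ^+ 2 <= sl ^+ 2 by rewrite !expr2; apply: ler_pM.
have hsig2 : 0 <= sig2.
  rewrite /sig2 /noise_var; apply: mulr_ge0; first by rewrite invr_ge0.
  by apply: sumr_ge0 => i _; apply: sumr_ge0 => j _; exact: sqr_ge0.
set C0 := M%:R * Ltilde A * condA smax smin * smax ^+ 2.
have hC0 : 0 <= C0.
  rewrite /C0 -/ML; apply: mulr_ge0; last exact: sqr_ge0.
  apply: mulr_ge0; first lra.
  by rewrite /condA; apply: divr_ge0; exact: sqr_ge0.
have hBf : forall k, Bfun M (Ltilde A) smax smin (alpha k) = alpha k ^+ 2 * C0.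
  by move=> k; rewrite /Bfun /C0; ring.
have hs0 : 0 <= s by rewrite /s; apply: mulr_ge0; [lra | exact: sqr_ge0].
have gen : forall r t, 0 <= r -> r <= 1 -> r < s -> 0 <= t -> t <= 1 + r -> t < 2 * s ->
    exists K, forall n, (1 <= n)%N -> S n <= K * (b + n%:R) `^ (- t).
  move=> r t hr0 hr1 hrs ht0 ht1 ht2.
  have [K [hK0 hK]] : exists K, 0 <= K /\ forall n, S n <= K * (b + n%:R + 1) `^ (- t).
  apply: (@rec_lemma R b s r t (a ^+ 2 * C0) (8 * a ^+ 2 * sig2)
    (fun k => Afun sl (alpha k)) (fun k => Bfun M (Ltilde A) smax smin (alpha k))
    (fun k => pfun smin (alpha k)) (fun k => qfun sig2 (alpha k)) S
    (@Ep R smin sig2 alpha) (ltW hb0) hr0 hr1 hrs ht0 ht1 ht2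
    (mulr_ge0 (sqr_ge0 a) hC0) (mulr_ge0 (mulr_ge0 (ler0n R 8) (sqr_ge0 a)) hsig2)).
  - by rewrite /S /Sn big_geq.
  - by rewrite /Ep big_geq.
  - by move=> n; rewrite /S Sn_rec.
  - by move=> n; rewrite Ep_rec.
  - move=> n u.
    have hn := ler0n R n.
    have hx : 0 < b + n.+1%:R by lra.
    have hu0 : 0 <= u by rewrite /u invr_ge0; lra.
    have hau : alpha n.+1 = a * u by [].
    have hau0 : 0 <= a * u by apply: mulr_ge0; lra.
    have h1 : a * u * smin ^+ 2 <= a * u * sl ^+ 2 by apply: ler_wpM2l.
    have h2 := hasl n.+1; rewrite hau in h2.
    split; [split|split; [split|split; [split|split]]].
    + rewrite /Afun hau; lra.
    + rewrite /Afun hau /s; lra.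
    + rewrite /pfun hau; lra.
    + rewrite /pfun hau /s; lra.
    + by rewrite hBf; apply: mulr_ge0 => //; exact: sqr_ge0.
    + by rewrite hBf hau; have -> : (a * u) ^+ 2 * C0 = a ^+ 2 * C0 * u ^+ 2 by ring.
    + by rewrite /qfun; apply: mulr_ge0 => //; apply: mulr_ge0 => //; exact: sqr_ge0.
    + have hy : 1 <= b + n%:R by lra.
      have hinv : (b + n%:R)^-1 <= 2 * u.
        suff : 0 <= 2 * u - (b + n%:R)^-1 by lra.
        have -> : 2 * u - (b + n%:R)^-1 = (b + n%:R - 1) / ((b + n%:R) * (b + n.+1%:R)).
          rewrite /u -natr1; field; rewrite -natr1 in hx;
          repeat (apply/andP; split); apply: lt0r_neq0; lra.
        by apply: divr_ge0; [lra | apply: mulr_ge0; lra].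
      have hal : alpha n <= 2 * a * u.
        have -> : 2 * a * u = a * (2 * u) by ring.
        by rewrite /alpha; apply: ler_wpM2l => //; lra.
      have hal0 : 0 <= alpha n by case: (halpha n).
      have hq : alpha n ^+ 2 <= 4 * a ^+ 2 * u ^+ 2.
        have -> : 4 * a ^+ 2 * u ^+ 2 = (2 * a * u) ^+ 2 by ring.
        by rewrite !expr2; apply: ler_pM.
      have := ler_wpM2r hsig2 hq.
      rewrite /qfun; lra.
  exists K => n hn1.
  apply: (le_trans (hK n)); apply: ler_wpM2l => //.
  have hn := ler0n R n.
  have hnn1 : 1 <= n%:R :> R by rewrite ler1n.
  by apply: w_base => //; lra.
split.
- move=> hs2.
  have [hs00|hspos] := eqVneq s 0.
    have hsm : smin = 0.
      move: hs00; rewrite /s => /eqP; rewrite mulf_eq0 (gt_eqF ha) /= sqrf_eq0 => /eqP.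
      by [].
    have hC00 : C0 = 0 by rewrite /C0 /condA hsm expr0n /= invr0 !mulr0 mul0r.
    exists 0 => n _; rewrite mul0r.
    suff: forall n, S n = 0 by move=> ->.
    elim=> [|m IH]; first by rewrite /S /Sn big_geq.
    by rewrite /S Sn_rec -/S IH hBf hC00 !mulr0 mul0r addr0.
  have hsp : 0 < s by rewrite lt_def hspos hs0.
  by apply: (gen (s / 2) s); lra.
- move=> hs2; apply: (gen 1 2); lra.
Qed.
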